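(* For every slat-doctrine $P:\mathcal{C}^{\mathrm{op}}\to\mathbf{Pos}$, its universal completion $P^{un}$ is a universal slat-doctrine.
   Context: A slat-doctrine is a functor $P:\mathcal{C}^{\mathrm{op}}\to\mathbf{Pos}$ with $\mathcal{C}$ having finite products; $P_f:P(Y)\to P(X)$ is reindexing along $f:X\to Y$. It is universal if for all $A_1,A_2$ and $i=1,2$ the map $P_{\mathrm{pr}_i}:P(A_i)\to P(A_1\times A_2)$ has a right adjoint $\forall_{\mathrm{pr}_i}$ and these satisfy Beck–Chevalley: for every pullback of a projection $\mathrm{pr}:X\to A$ along $f:A'\to A$, with resulting projection $\mathrm{pr}':X'\to A'$ and $f':X'\to X$, $\forall_{\mathrm{pr}'}P_{f'}=P_f\forall_{\mathrm{pr}}$. Universal completion: $P^{un}(A)$ is the poset (reflection of the preorder) of triples $(A,B,\alpha)$ with $B$ an object of $\mathcal{C}$ and $\alpha\in P(A\times B)$, where $(A,B,\alpha)\le(A,C,\beta)$ iff there is an arrow $g:A\times C\to B$ with $P_{\langle\mathrm{pr}_A,g\rangle}(\alpha)\le\beta$; for $f:A\to C$, $P^{un}_f(C,D,\gamma)=(A,D,P_{f\times 1_D}(\gamma))$. *)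

(* Defs.v *)
From Stdlib Require Import ClassicalEpsilon.

Record Cat : Type := MkCat {
  ob : Type;
  hom : ob -> ob -> Type;
  idm : forall A : ob, hom A A;
  (* comp A B C g f  =  g o f  : A -> C *)
  comp : forall A B C : ob, hom B C -> hom A B -> hom A C;
  comp_idl : forall A B (f : hom A B), comp A B B (idm B) f = f;
  comp_idr : forall A B (f : hom A B), comp A A B f (idm A) = f;
  comp_assoc : forall A B C D (f : hom A B) (g : hom B C) (h : hom C D),
      comp A C D h (comp A B C g f) = comp A B D (comp B C D h g) f
}.

Arguments idm {c} A.
Arguments comp {c A B C} g f.

Record FPCat : Type := MkFPCat {
  cat :> Cat;
  term : ob cat;
  bang : forall A : ob cat, hom cat A term;
  bang_uniq : forall A (f : hom cat A term), f = bang A;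
  prod : ob cat -> ob cat -> ob cat;
  pr1 : forall A B, hom cat (prod A B) A;
  pr2 : forall A B, hom cat (prod A B) B;
  pair : forall X A B, hom cat X A -> hom cat X B -> hom cat X (prod A B);
  pair_pr1 : forall X A B (f : hom cat X A) (g : hom cat X B),
      comp (pr1 A B) (pair X A B f g) = f;
  pair_pr2 : forall X A B (f : hom cat X A) (g : hom cat X B),
      comp (pr2 A B) (pair X A B f g) = g;
  pair_uniq : forall X A B (h : hom cat X (prod A B)),
      h = pair X A B (comp (pr1 A B) h) (comp (pr2 A B) h)
}.

Arguments term {f0}.
Arguments prod {f0} _ _.
Arguments pr1 {f0} A B.
Arguments pr2 {f0} A B.
Arguments pair {f0 X A B} _ _.

Definition fprod (C : FPCat) (A A' B B' : ob C) (f : hom C A A') (g : hom C B B')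
  : hom C (prod A B) (prod A' B') :=
  pair (comp f (pr1 A B)) (comp g (pr2 A B)).
Arguments fprod {C A A' B B'} f g.

Record DocData (C : FPCat) : Type := MkDocData {
  fib : ob C -> Type;
  fle : forall A : ob C, fib A -> fib A -> Prop;
  reidx : forall A B : ob C, hom C A B -> fib B -> fib A
}.
Arguments fib {C} d A.
Arguments fle {C} d {A} _ _.
Arguments reidx {C} d {A B} f _.

Definition is_doctrine (C : FPCat) (P : DocData C) : Prop :=
  (forall A (x : fib P A), fle P x x) /\
  (forall A (x y z : fib P A), fle P x y -> fle P y z -> fle P x z) /\
  (forall A (x y : fib P A), fle P x y -> fle P y x -> x = y) /\
  (forall A B (f : hom C A B) (x y : fib P B), fle P x y -> fle P (reidx P f x) (reidx P f y)) /\
  (forall A (x : fib P A), reidx P (idm A) x = x) /\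
  (forall A B D (f : hom C A B) (g : hom C B D) (x : fib P D),
      reidx P (comp g f) x = reidx P f (reidx P g x)).

Definition slat_doctrine (C : FPCat) (P : DocData C) : Prop := is_doctrine C P.

(* Universal slat-doctrine: P_{pr_i} has a right adjoint forall_{pr_i} for all A1, A2,
   i = 1,2, satisfying Beck-Chevalley along the pullback of pr_i along f, i.e.
     pr1 : A x B -> A  pulled back along f : A' -> A  is  pr1 : A' x B -> A'  with f' = f x 1_B,
     pr2 : B x A -> A  pulled back along f : A' -> A  is  pr2 : B x A' -> A'  with f' = 1_B x f. *)
Definition is_universal (C : FPCat) (P : DocData C) : Prop :=
  slat_doctrine C P /\
  exists (all1 : forall A1 A2 : ob C, fib P (prod A1 A2) -> fib P A1)
         (all2 : forall A1 A2 : ob C, fib P (prod A1 A2) -> fib P A2),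
    (forall A1 A2 (a : fib P A1) (b : fib P (prod A1 A2)),
        fle P (reidx P (pr1 A1 A2) a) b <-> fle P a (all1 A1 A2 b)) /\
    (forall A1 A2 (a : fib P A2) (b : fib P (prod A1 A2)),
        fle P (reidx P (pr2 A1 A2) a) b <-> fle P a (all2 A1 A2 b)) /\
    (forall A A' B (f : hom C A' A) (b : fib P (prod A B)),
        all1 A' B (reidx P (fprod f (idm B)) b) = reidx P f (all1 A B b)) /\
    (forall A A' B (f : hom C A' A) (b : fib P (prod B A)),
        all2 B A' (reidx P (fprod (idm B) f) b) = reidx P f (all2 B A b)).

Definition equivr {X : Type} (le : X -> X -> Prop) (x : X) : X -> Prop :=
  fun y => le x y /\ le y x.

Definition refl_ty (X : Type) (le : X -> X -> Prop) : Type :=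
  { S : X -> Prop | exists x, S = equivr le x }.

Definition cls {X : Type} (le : X -> X -> Prop) (x : X) : refl_ty X le :=
  exist _ (equivr le x) (ex_intro _ x eq_refl).

Definition rep {X : Type} {le : X -> X -> Prop} (S : refl_ty X le) : X :=
  proj1_sig (constructive_indefinite_description _ (proj2_sig S)).

Definition refl_le {X : Type} (le : X -> X -> Prop) (S T : refl_ty X le) : Prop :=
  le (rep S) (rep T).

Definition refl_map {X Y : Type} (leX : X -> X -> Prop) (leY : Y -> Y -> Prop)
  (h : X -> Y) (S : refl_ty X leX) : refl_ty Y leY :=
  cls leY (h (rep S)).

Section Un.
Variables (C : FPCat) (P : DocData C).

Definition tri (A : ob C) : Type := { B : ob C & fib P (prod A B) }.

Definition tri_le (A : ob C) (t u : tri A) : Prop :=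
  exists g : hom C (prod A (projT1 u)) (projT1 t),
    fle P (reidx P (pair (pr1 A (projT1 u)) g) (projT2 t)) (projT2 u).

Definition tri_reidx (A A' : ob C) (f : hom C A A') (t : tri A') : tri A :=
  existT _ (projT1 t) (reidx P (fprod f (idm (projT1 t))) (projT2 t)).

Definition Pun : DocData C :=
  MkDocData C
    (fun A => refl_ty (tri A) (tri_le A))
    (fun A => refl_le (tri_le A))
    (fun A A' f => refl_map (tri_le A') (tri_le A) (tri_reidx A A' f)).
End Un.
Arguments Pun {C} P.

(* Main.v *)
Require Import Defs.
From Stdlib Require Import ClassicalEpsilon FunctionalExtensionality PropExtensionality ProofIrrelevance.

Lemma sig_eq {X : Type} {Q : X -> Prop} (x y : sig Q) : proj1_sig x = proj1_sig y -> x = y.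
Proof. destruct x as [x px], y as [y py]; simpl; intros ->. f_equal. apply proof_irrelevance. Qed.

Lemma rep_spec {X} {le : X -> X -> Prop} (S : refl_ty X le) : proj1_sig S = equivr le (rep S).
Proof. unfold rep. destruct (constructive_indefinite_description _ _) as [x Hx]. simpl. exact Hx. Qed.

Lemma equivr_eq {X} (le : X -> X -> Prop)
  (Ht : forall a b c, le a b -> le b c -> le a c) x y : le x y -> le y x ->
  equivr le x = equivr le y.
Proof. intros H1 H2. extensionality z. apply propositional_extensionality.
  unfold equivr; split; intros [? ?]; split; eauto. Qed.

Lemma rep_cls {X} (le : X -> X -> Prop) (Hr : forall x, le x x) x :
  le (rep (cls le x)) x /\ le x (rep (cls le x)).
Proof.
  pose proof (rep_spec (cls le x)) as H. simpl in H.
  assert (Hx : equivr le x x) by (split; apply Hr).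
  rewrite H in Hx. destruct Hx as [a b]. split; assumption.
Qed.

Lemma cls_rep {X} (le : X -> X -> Prop) (S : refl_ty X le) : cls le (rep S) = S.
Proof. apply sig_eq. simpl. symmetry. apply rep_spec. Qed.

Lemma cls_eq {X} (le : X -> X -> Prop)
  (Ht : forall a b c, le a b -> le b c -> le a c) x y : le x y -> le y x ->
  cls le x = cls le y.
Proof. intros. apply sig_eq. simpl. apply equivr_eq; auto. Qed.

Lemma pair_ext (C : FPCat) X A B (h k : hom C X (prod A B)) :
  comp (pr1 A B) h = comp (pr1 A B) k -> comp (pr2 A B) h = comp (pr2 A B) k -> h = k.
Proof. intros H1 H2.
  transitivity (pair (comp (pr1 A B) h) (comp (pr2 A B) h)); [apply pair_uniq|].
  rewrite H1, H2. symmetry. apply pair_uniq. Qed.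

Lemma pair_comp (C : FPCat) X Y A B (f : hom C Y A) (g : hom C Y B) (k : hom C X Y) :
  comp (pair f g) k = pair (comp f k) (comp g k).
Proof. apply pair_ext; rewrite comp_assoc, ?pair_pr1, ?pair_pr2, ?pair_pr1; reflexivity. Qed.

Lemma pair_id (C : FPCat) A B : pair (pr1 A B) (pr2 A B) = idm (prod A B) :> hom C _ _.
Proof. apply pair_ext; rewrite ?pair_pr1, ?pair_pr2, comp_idr; reflexivity. Qed.

Ltac cnorm := repeat first
  [ rewrite comp_idl | rewrite comp_idr | rewrite pair_pr1 | rewrite pair_pr2
  | rewrite pair_comp | rewrite <- comp_assoc | rewrite pair_id ].

Definition assoc1 (C : FPCat) (A1 A2 B : ob C) : hom C (prod A1 (prod A2 B)) (prod (prod A1 A2) B) :=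
  pair (pair (pr1 _ _) (comp (pr1 _ _) (pr2 _ _))) (comp (pr2 _ _) (pr2 _ _)).
Definition inv1 (C : FPCat) (A1 A2 B : ob C) : hom C (prod (prod A1 A2) B) (prod A1 (prod A2 B)) :=
  pair (comp (pr1 _ _) (pr1 _ _)) (pair (comp (pr2 _ _) (pr1 _ _)) (pr2 _ _)).
Definition assoc2 (C : FPCat) (A1 A2 B : ob C) : hom C (prod A2 (prod A1 B)) (prod (prod A1 A2) B) :=
  pair (pair (comp (pr1 _ _) (pr2 _ _)) (pr1 _ _)) (comp (pr2 _ _) (pr2 _ _)).
Definition inv2 (C : FPCat) (A1 A2 B : ob C) : hom C (prod (prod A1 A2) B) (prod A2 (prod A1 B)) :=
  pair (comp (pr2 _ _) (pr1 _ _)) (pair (comp (pr1 _ _) (pr1 _ _)) (pr2 _ _)).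

Ltac hsolve := unfold fprod, assoc1, inv1, assoc2, inv2; cnorm;
  first [reflexivity | apply pair_ext; hsolve].

Lemma fle_of_eq {C : FPCat} {P : DocData C} (HP : is_doctrine C P) A (x y : fib P A) :
  x = y -> fle P x y.
Proof. intros ->. apply HP. Qed.

Ltac dest HP := let Pr := fresh "Pr" in let Pt := fresh "Pt" in let Pa := fresh "Pa" in
  let Pm := fresh "Pm" in let Pid := fresh "Pid" in let Pc := fresh "Pc" in
  pose proof HP as [Pr [Pt [Pa [Pm [Pid Pc]]]]].

Ltac req Pc := repeat rewrite <- Pc; f_equal; hsolve.

Lemma tle_refl {C : FPCat} {P : DocData C} (HP : is_doctrine C P) A t : tri_le C P A t t.
Proof. dest HP. destruct t as [B a]. exists (pr2 A B). simpl. rewrite pair_id, Pid. apply Pr. Qed.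

Lemma tle_trans {C : FPCat} {P : DocData C} (HP : is_doctrine C P) A t u v :
  tri_le C P A t u -> tri_le C P A u v -> tri_le C P A t v.
Proof. dest HP. destruct t as [B a], u as [D b], v as [E c].
  intros [g1 H1] [g2 H2]. simpl in *.
  exists (comp g1 (pair (pr1 A E) g2)). simpl.
  apply Pt with (reidx P (pair (pr1 A E) g2) (reidx P (pair (pr1 A D) g1) a)).
  - apply (fle_of_eq HP). req Pc.
  - apply Pt with (reidx P (pair (pr1 A E) g2) b); [apply Pm; exact H1 | exact H2].
Qed.

Lemma trm_mono {C : FPCat} {P : DocData C} (HP : is_doctrine C P) A A' (f : hom C A A') t u :
  tri_le C P A' t u -> tri_le C P A (tri_reidx C P A A' f t) (tri_reidx C P A A' f u).
Proof. dest HP. destruct t as [B a], u as [D b]. intros [g H]. simpl in *.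
  exists (comp g (fprod f (idm D))). simpl.
  apply Pt with (reidx P (fprod f (idm D)) (reidx P (pair (pr1 A' D) g) a)).
  - apply (fle_of_eq HP). req Pc.
  - apply Pm. exact H.
Qed.

Lemma trm_comp {C : FPCat} {P : DocData C} (HP : is_doctrine C P) A B D
  (f : hom C A B) (g : hom C B D) t :
  tri_reidx C P A D (comp g f) t = tri_reidx C P A B f (tri_reidx C P B D g t).
Proof. dest HP. destruct t as [E a]. unfold tri_reidx; simpl. req Pc. Qed.

Lemma trm_id {C : FPCat} {P : DocData C} (HP : is_doctrine C P) A t :
  tri_reidx C P A A (idm A) t = t.
Proof. dest HP. destruct t as [E a]. unfold tri_reidx; simpl.
  replace (fprod (idm A) (idm E)) with (idm (prod A E)) by (symmetry; hsolve).
  rewrite Pid. reflexivity. Qed.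

Lemma cls_le {C : FPCat} {P : DocData C} (HP : is_doctrine C P) A x y :
  tri_le C P A x y ->
  tri_le C P A (rep (cls (tri_le C P A) x)) (rep (cls (tri_le C P A) y)).
Proof. intros H. destruct (rep_cls _ (tle_refl HP A) x) as [H1 _].
  destruct (rep_cls _ (tle_refl HP A) y) as [_ H2].
  eapply tle_trans; [exact HP| exact H1|]. eapply tle_trans; eauto. Qed.

Lemma cls_le' {C : FPCat} {P : DocData C} (HP : is_doctrine C P) A x y :
  tri_le C P A (rep (cls (tri_le C P A) x)) (rep (cls (tri_le C P A) y)) ->
  tri_le C P A x y.
Proof. intros H. destruct (rep_cls _ (tle_refl HP A) x) as [_ H1].
  destruct (rep_cls _ (tle_refl HP A) y) as [H2 _].
  eapply tle_trans; [exact HP| exact H1|]. eapply tle_trans; eauto. Qed.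

Lemma Pun_doc {C : FPCat} {P : DocData C} (HP : is_doctrine C P) : is_doctrine C (Pun P).
Proof.
  split; [|split; [|split; [|split; [|split]]]]; simpl; unfold refl_le, refl_map.
  - intros A S. apply (tle_refl HP).
  - intros A S T U. apply (tle_trans HP).
  - intros A S T H1 H2. rewrite <- (cls_rep _ S), <- (cls_rep _ T).
    apply cls_eq; auto. intros; eapply tle_trans; eauto.
  - intros A B f S T H. apply (cls_le HP). apply (trm_mono HP). exact H.
  - intros A S. rewrite (trm_id HP). apply cls_rep.
  - intros A B D f g S. rewrite (trm_comp HP). apply cls_eq.
    + intros; eapply tle_trans; eauto.
    + apply (trm_mono HP). exact (proj2 (rep_cls _ (tle_refl HP _) _)).
    + apply (trm_mono HP). exact (proj1 (rep_cls _ (tle_refl HP _) _)).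
Qed.

Definition all1t {C : FPCat} (P : DocData C) A1 A2 (u : tri C P (prod A1 A2)) : tri C P A1 :=
  existT _ (prod A2 (projT1 u)) (reidx P (assoc1 C A1 A2 (projT1 u)) (projT2 u)).
Definition all2t {C : FPCat} (P : DocData C) A1 A2 (u : tri C P (prod A1 A2)) : tri C P A2 :=
  existT _ (prod A1 (projT1 u)) (reidx P (assoc2 C A1 A2 (projT1 u)) (projT2 u)).

Lemma adj1 {C : FPCat} {P : DocData C} (HP : is_doctrine C P) A1 A2 t u :
  tri_le C P (prod A1 A2) (tri_reidx C P _ _ (pr1 A1 A2) t) u <-> tri_le C P A1 t (all1t P A1 A2 u).
Proof. dest HP. destruct t as [D d], u as [B b]. unfold tri_le, tri_reidx, all1t; simpl. split.
  - intros [g H]. exists (comp g (assoc1 C A1 A2 B)).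
    apply Pt with (reidx P (assoc1 C A1 A2 B) (reidx P (pair (pr1 _ _) g) (reidx P (fprod (pr1 A1 A2) (idm D)) d))).
    + apply (fle_of_eq HP). req Pc.
    + apply Pm. exact H.
  - intros [g H]. exists (comp g (inv1 C A1 A2 B)).
    apply Pt with (reidx P (inv1 C A1 A2 B) (reidx P (pair (pr1 _ _) g) d)).
    + apply (fle_of_eq HP). req Pc.
    + apply Pt with (reidx P (inv1 C A1 A2 B) (reidx P (assoc1 C A1 A2 B) b)).
      * apply Pm. exact H.
      * apply (fle_of_eq HP). rewrite <- Pc.
        assert (E : comp (assoc1 C A1 A2 B) (inv1 C A1 A2 B) = idm _) by hsolve.
        rewrite E, Pid. reflexivity.
Qed.

Lemma adj2 {C : FPCat} {P : DocData C} (HP : is_doctrine C P) A1 A2 t u :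
  tri_le C P (prod A1 A2) (tri_reidx C P _ _ (pr2 A1 A2) t) u <-> tri_le C P A2 t (all2t P A1 A2 u).
Proof. dest HP. destruct t as [D d], u as [B b]. unfold tri_le, tri_reidx, all2t; simpl. split.
  - intros [g H]. exists (comp g (assoc2 C A1 A2 B)).
    apply Pt with (reidx P (assoc2 C A1 A2 B) (reidx P (pair (pr1 _ _) g) (reidx P (fprod (pr2 A1 A2) (idm D)) d))).
    + apply (fle_of_eq HP). req Pc.
    + apply Pm. exact H.
  - intros [g H]. exists (comp g (inv2 C A1 A2 B)).
    apply Pt with (reidx P (inv2 C A1 A2 B) (reidx P (pair (pr1 _ _) g) d)).
    + apply (fle_of_eq HP). req Pc.
    + apply Pt with (reidx P (inv2 C A1 A2 B) (reidx P (assoc2 C A1 A2 B) b)).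
      * apply Pm. exact H.
      * apply (fle_of_eq HP). rewrite <- Pc.
        assert (E : comp (assoc2 C A1 A2 B) (inv2 C A1 A2 B) = idm _) by hsolve.
        rewrite E, Pid. reflexivity.
Qed.

Lemma all1t_mono {C : FPCat} {P : DocData C} (HP : is_doctrine C P) A1 A2 u v :
  tri_le C P _ u v -> tri_le C P A1 (all1t P A1 A2 u) (all1t P A1 A2 v).
Proof. dest HP. destruct u as [B b], v as [B' b']. unfold tri_le, all1t; simpl.
  intros [g H]. exists (pair (comp (pr1 _ _) (pr2 _ _)) (comp g (assoc1 C A1 A2 B'))).
  apply Pt with (reidx P (assoc1 C A1 A2 B') (reidx P (pair (pr1 _ _) g) b)).
  - apply (fle_of_eq HP). req Pc.
  - apply Pm. exact H.
Qed.

Lemma all2t_mono {C : FPCat} {P : DocData C} (HP : is_doctrine C P) A1 A2 u v :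
  tri_le C P _ u v -> tri_le C P A2 (all2t P A1 A2 u) (all2t P A1 A2 v).
Proof. dest HP. destruct u as [B b], v as [B' b']. unfold tri_le, all2t; simpl.
  intros [g H]. exists (pair (comp (pr1 _ _) (pr2 _ _)) (comp g (assoc2 C A1 A2 B'))).
  apply Pt with (reidx P (assoc2 C A1 A2 B') (reidx P (pair (pr1 _ _) g) b)).
  - apply (fle_of_eq HP). req Pc.
  - apply Pm. exact H.
Qed.

Lemma bc1 {C : FPCat} {P : DocData C} (HP : is_doctrine C P) A A' B (f : hom C A' A) u :
  all1t P A' B (tri_reidx C P _ _ (fprod f (idm B)) u) = tri_reidx C P _ _ f (all1t P A B u).
Proof. dest HP. destruct u as [D b]. unfold tri_reidx, all1t; simpl. req Pc. Qed.

Lemma bc2 {C : FPCat} {P : DocData C} (HP : is_doctrine C P) A A' B (f : hom C A' A) u :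
  all2t P B A' (tri_reidx C P _ _ (fprod (idm B) f) u) = tri_reidx C P _ _ f (all2t P B A u).
Proof. dest HP. destruct u as [D b]. unfold tri_reidx, all2t; simpl. req Pc. Qed.

Lemma rcl {C : FPCat} {P : DocData C} (HP : is_doctrine C P) A x y :
  tri_le C P A (rep (cls (tri_le C P A) x)) y <-> tri_le C P A x y.
Proof. destruct (rep_cls _ (tle_refl HP A) x) as [H1 H2].
  split; intros; eapply tle_trans; eauto. Qed.

Lemma rcr {C : FPCat} {P : DocData C} (HP : is_doctrine C P) A x y :
  tri_le C P A y (rep (cls (tri_le C P A) x)) <-> tri_le C P A y x.
Proof. destruct (rep_cls _ (tle_refl HP A) x) as [H1 H2].
  split; intros; eapply tle_trans; eauto. Qed.

Theorem theorem2 (C : FPCat) (P : DocData C) :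
  slat_doctrine C P -> is_universal C (Pun P).
Proof.
  intros HP. split; [apply (Pun_doc HP)|].
  exists (fun A1 A2 S => cls (tri_le C P A1) (all1t P A1 A2 (rep S))).
  exists (fun A1 A2 S => cls (tri_le C P A2) (all2t P A1 A2 (rep S))).
  assert (Ht : forall A a b c, tri_le C P A a b -> tri_le C P A b c -> tri_le C P A a c)
    by (intros; eapply tle_trans; eauto).
  split; [|split; [|split]]; simpl; unfold refl_le, refl_map.
  - intros A1 A2 a b. rewrite (rcl HP), (rcr HP). apply (adj1 HP).
  - intros A1 A2 a b. rewrite (rcl HP), (rcr HP). apply (adj2 HP).
  - intros A A' B f b. apply cls_eq; [apply Ht| |].
    + eapply Ht; [apply (all1t_mono HP); apply (rcl HP); apply (tle_refl HP)|].
      rewrite (bc1 HP). apply (trm_mono HP). apply (rcr HP). apply (tle_refl HP).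
    + eapply Ht; [apply (trm_mono HP); apply (rcl HP); apply (tle_refl HP)|].
      rewrite <- (bc1 HP). apply (all1t_mono HP). apply (rcr HP). apply (tle_refl HP).
  - intros A A' B f b. apply cls_eq; [apply Ht| |].
    + eapply Ht; [apply (all2t_mono HP); apply (rcl HP); apply (tle_refl HP)|].
      rewrite (bc2 HP). apply (trm_mono HP). apply (rcr HP). apply (tle_refl HP).
    + eapply Ht; [apply (trm_mono HP); apply (rcl HP); apply (tle_refl HP)|].
      rewrite <- (bc2 HP). apply (all2t_mono HP). apply (rcr HP). apply (tle_refl HP).
Qed.
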